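(* Let $p\ge5$ be a prime and $n,k\in\mathbb{N}$ with $n>k$. Then \[ \sum_{j=1}^{p-1}\binom{np}{kp+j}^2\binom{2kp+2j}{kp+j}\binom{2np-2kp-2j}{np-kp-j}\equiv 8p^3B_{p-3}\,n(n-k)^2\binom{n}{k}^2\binom{2k}{k}\binom{2n-2k-2}{n-k-1}\pmod{p^4}. \]
   Context: The Bernoulli numbers $B_m$ are defined by $\frac{z}{e^z-1}=\sum_{m\ge0}B_m\frac{z^m}{m!}$. For rationals $a,b$, $a\equiv b\pmod{p^m}$ means $(a-b)/p^m$ is a rational number whose denominator is not divisible by $p$. *)

(* Defs.v *)
From mathcomp Require Import all_boot all_order all_algebra.
Set Implicit Arguments. Unset Strict Implicit. Unset Printing Implicit Defensive.
Import Order.TTheory GRing.Theory Num.Theory.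
Local Open Scope ring_scope.

(* Bernoulli numbers B_0, ..., B_m (as rationals), via the recurrence
   B_0 = 1,  sum_{i=0}^{m} C(m+1,i) B_i = 0 for m >= 1,
   which is the coefficient identity equivalent to z/(e^z-1) = sum B_m z^m/m!
   (so B_1 = -1/2). *)
Fixpoint bern_seq (m : nat) : seq rat :=
  match m with
  | 0%N => [:: 1]
  | m'.+1 =>
      let s := bern_seq m' in
      rcons s (- (m'.+2%:R)^-1 *
               \sum_(i < m'.+1) ('C(m'.+2, i))%:R * s`_i)
  end.

Definition bernoulli (m : nat) : rat := (bern_seq m)`_m.

(* a = b (mod p^m) for rationals: (a - b)/p^m has denominator prime to p. *)
Definition rat_congr (p m : nat) (a b : rat) : Prop :=
  ~~ (p%:Z %| denq ((a - b) / (p%:R ^+ m)))%Z.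

(* Main.v *)
Require Import Defs.
From mathcomp Require Import all_boot all_order all_algebra.
From mathcomp Require Import zify ring lra.
Set Implicit Arguments. Unset Strict Implicit. Unset Printing Implicit Defensive.
Import Order.TTheory GRing.Theory Num.Theory.
Local Open Scope ring_scope.

Lemma Fp_eq0 p n : prime p -> ((n%:R : 'F_p) == 0) = (p %| n)%N.
Proof. by move=> pp; rewrite (dvdn_pcharf (pchar_Fp pp)). Qed.

Lemma Fp_p p : prime p -> (p%:R : 'F_p) = 0.
Proof. by move=> pp; apply/eqP; rewrite Fp_eq0. Qed.

Lemma Fp_Cp p s : prime p -> (0 < s < p)%N -> ('C(p, s)%:R : 'F_p) = 0.
Proof. by move=> pp hs; apply/eqP; rewrite Fp_eq0 // prime_dvd_bin. Qed.

Lemma lucas_base p a B b : prime p -> (a < p)%N -> (b < p)%N ->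
  ('C(0 * p + a, B * p + b)%:R : 'F_p) = ('C(0, B))%:R * ('C(a, b))%:R.
Proof.
move=> pp ha hb; case: B => [|B]; first by rewrite !mul0n !add0n bin0 mul1r.
rewrite bin0n /= mul0r bin_small //; nia.
Qed.

Lemma lucas_stepa p A a : prime p -> (a.+1 < p)%N ->
  (forall B b, (b < p)%N -> ('C(A * p + a, B * p + b)%:R : 'F_p) = ('C(A, B))%:R * ('C(a, b))%:R) ->
  (forall B b, (b < p)%N -> ('C(A * p + a.+1, B * p + b)%:R : 'F_p) = ('C(A, B))%:R * ('C(a.+1, b))%:R).
Proof.
move=> pp ha IH B [|b] hb.
  case: B => [|B]; first by rewrite !mul0n !add0n !bin0 mulr1.
  have e : (B.+1 * p + 0 = (B * p + p.-1).+1)%N.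
    have := prime_gt0 pp; nia.
  rewrite e addnS binS -e natrD IH // IH; last by rewrite prednK // prime_gt0.
  rewrite (@bin_small a p.-1); last by have := prime_gt0 pp; lia.
  by rewrite mulr0 addr0 !bin0.
rewrite !addnS binS natrD -addnS IH // IH; last lia.
by rewrite -mulrDr -natrD -binS.
Qed.

Lemma lucas_all_a p A : prime p ->
  (forall a B b, (a < p)%N -> (b < p)%N -> ('C(A * p + 0, B * p + b)%:R : 'F_p) = ('C(A, B))%:R * ('C(0, b))%:R) ->
  (forall a B b, (a < p)%N -> (b < p)%N -> ('C(A * p + a, B * p + b)%:R : 'F_p) = ('C(A, B))%:R * ('C(a, b))%:R).
Proof.
move=> pp H0; elim=> [|a IHa] B b ha hb; first exact: (H0 0%N).
apply: lucas_stepa => // B' b' hb'; apply: IHa => //; lia.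
Qed.

Lemma lucas p A a B b : prime p -> (a < p)%N -> (b < p)%N ->
  ('C(A * p + a, B * p + b)%:R : 'F_p) = ('C(A, B))%:R * ('C(a, b))%:R.
Proof.
move=> pp; move: a B b; elim: A => [|A IHA].
  by move=> a B b ha hb; apply: lucas_base.
apply: lucas_all_a => // _ B b _ hb.
have p0 := prime_gt0 pp.
have e : (A.+1 * p + 0 = (A * p + p.-1).+1)%N by nia.
case: b hb => [|b] hb.
  case: B => [|B]; first by rewrite !mul0n !add0n !bin0 mulr1.
  have e2 : (B.+1 * p + 0 = (B * p + p.-1).+1)%N by nia.
  rewrite e e2 binS -e2 natrD IHA ?prednK // IHA ?prednK //; try lia.
  by rewrite !bin0 binn !mulr1 -natrD -binS.
rewrite e !addnS binS natrD.
rewrite -addnS !(IHA p.-1) ?prednK; try lia.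
rewrite -mulrDr -natrD -binS prednK // Fp_Cp ?bin0n ?mulr0 //.
Qed.

Lemma Cpm1 p i : prime p -> (i < p)%N -> ('C(p.-1, i)%:R : 'F_p) = (-1) ^+ i.
Proof.
move=> pp; have p0 := prime_gt0 pp.
elim: i => [|i IH] hi; first by rewrite bin0 expr0.
have : ('C(p, i.+1)%:R : 'F_p) = 0 by apply: Fp_Cp => //; lia.
have e : 'C(p, i.+1) = ('C(p.-1, i.+1) + 'C(p.-1, i))%N by rewrite -binS prednK.
rewrite e natrD IH; last lia.
by move/eqP; rewrite addr_eq0 => /eqP ->; rewrite exprS mulN1r.
Qed.

Definition cb N := 'C(2 * N, N).

Lemma cb_rec N : (N.+1 * cb N.+1 = 2 * (2 * N + 1) * cb N)%N.
Proof.
rewrite /cb.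
have -> : (2 * N.+1 = (2 * N + 1).+1)%N by lia.
rewrite binS.
have -> : 'C(2 * N + 1, N) = 'C(2 * N + 1, N.+1).
  rewrite -(@bin_sub (2 * N + 1) N); last lia.
  by have -> : (2 * N + 1 - N = N.+1)%N by lia.
have := mul_bin_diag (2 * N + 1) N.
have -> : (2 * N + 1).-1 = (2 * N)%N by lia.
move=> H.
have -> : (N.+1 * ('C(2 * N + 1, N.+1) + 'C(2 * N + 1, N.+1)) = 2 * (N.+1 * 'C(2 * N + 1, N.+1)))%N by ring.
by rewrite -H mulnA.
Qed.

Lemma Fp_unit p x : prime p -> ~~ (p %| x)%N -> (x%:R : 'F_p) != 0.
Proof. by move=> pp hx; rewrite Fp_eq0. Qed.

Lemma dvd_cancel p x y : prime p -> ~~ (p %| x)%N -> (p %| x * y)%N -> (p %| y)%N.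
Proof. by move=> pp hx; rewrite Euclid_dvdM // (negPf hx). Qed.

Lemma ndvd_small p a k : (0 < a < p)%N -> ~~ (p %| k * p + a)%N.
Proof.
move=> ha; rewrite dvdn_addr ?dvdn_mull //.
by apply/negP => /dvdn_leq; lia.
Qed.

Lemma cb_carry p h A t : prime p -> p = (2 * h + 1)%N -> (h + 1 + t < p)%N ->
  (p %| cb (A * p + (h + 1 + t)))%N /\
  ((cb (A * p + (h + 1 + t)) %/ p)%:R * (p - (h + 1 + t))%:R * (cb (p - (h + 1 + t)))%:R
     = - 2 * (2 * A + 1)%:R * (cb A)%:R :> 'F_p).
Proof.
move=> pp ph; have p0 := prime_gt0 pp.
have Fp0 : (p%:R : 'F_p) = 0 by apply: Fp_p.
elim: t => [|t IH] ht.
  have rec := cb_rec (A * p + h).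
  have e1 : ((2 * (A * p + h) + 1) = (2 * A + 1) * p)%N by nia.
  rewrite e1 -addn1 -[(A * p + h + 1)%N]addnA in rec.
  have hd : (p %| cb (A * p + (h + 1 + 0)))%N.
    apply: (@dvd_cancel p (A * p + (h + 1))) => //.
      by apply: ndvd_small; lia.
    by rewrite addn0 rec; apply/dvdnP; exists (2 * (2 * A + 1) * cb (A * p + h))%N; ring.
  split => //.
  move: (divnK hd) rec; set y := (_ %/ p)%N; rewrite addn0 => <-.
  have -> : (2 * ((2 * A + 1) * p) * cb (A * p + h) = p * (2 * (2 * A + 1) * cb (A * p + h)))%N by ring.
  have -> : ((A * p + (h + 1)) * (y * p) = p * ((A * p + (h + 1)) * y))%N by ring.
  move/eqP; rewrite eqn_pmul2l // => /eqP rec.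
  have := congr1 (fun n => (n%:R : 'F_p)) rec => /=.
  rewrite !natrM natrD natrM Fp0 mulr0 add0r.
  rewrite /cb.
  have -> : (2 * (A * p + h) = (2 * A) * p + 2 * h)%N by ring.
  rewrite lucas //; last lia; last lia.
  have -> : (2 * h = p.-1)%N by lia.
  rewrite Cpm1 //; last lia.
  have -> : (p - (h + 1) = h)%N by lia.
  have -> : (2 * h = p.-1)%N by lia.
  rewrite Cpm1 //; last lia.
  set s := ((-1) ^+ h : 'F_p).
  have s2 : s * s = 1 by rewrite /s -exprMn mulN1r opprK expr1n.
  have hu : 2 * (h%:R : 'F_p) + 1 = 0.
    have : (((2 * h + 1)%N)%:R : 'F_p) = 0 by rewrite -ph.
    by rewrite natrD natrM.
  have h1 : 2 * ((h + 1)%:R : 'F_p) = 1.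
    by apply/eqP; rewrite -subr_eq0 -hu natrD; apply/eqP; ring.
  move=> H.
  have hY : (y%:R : 'F_p) = 2 * (2 * (2 * A + 1)%:R * ('C(2 * A, A)%:R * s)).
    by rewrite -H mulrA h1 mul1r.
  rewrite hY.
  have e : (2 * (2 * (2 * A + 1)%:R * ('C(2 * A, A)%:R * s)) * h%:R * s : 'F_p)
     = 2 * (2 * h%:R) * (2 * A + 1)%:R * 'C(2 * A, A)%:R * (s * s) by ring.
  rewrite e s2 mulr1.
  have -> : 2 * (h%:R : 'F_p) = -1 by apply/eqP; rewrite -subr_eq0 opprK hu.
  ring.
have [hd IH2] : _ := IH ltac:(lia).
set i := (h + 1 + t)%N in ht hd IH2 *.
rewrite addnS -/i in ht *.
have rec := cb_rec (A * p + i).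
move: (divnK hd) IH2 rec; set y := (cb (A * p + i) %/ p)%N => <- IH2 rec.
have hd' : (p %| cb (A * p + i).+1)%N.
  apply: (@dvd_cancel p (A * p + i).+1) => //.
    by rewrite -addnS; apply: ndvd_small; lia.
  by rewrite rec; apply/dvdnP; exists (2 * (2 * (A * p + i) + 1) * y)%N; ring.
rewrite addnS; split => //.
move: (divnK hd') rec; set y' := (cb (A * p + i).+1 %/ p)%N => <-.
have -> : ((A * p + i).+1 * (y' * p) = p * ((A * p + i).+1 * y'))%N by ring.
have -> : (2 * (2 * (A * p + i) + 1) * (y * p) = p * (2 * (2 * (A * p + i) + 1) * y))%N by ring.
move/eqP; rewrite eqn_pmul2l // => /eqP rec.
have := congr1 (fun n => (n%:R : 'F_p)) rec => /=.
have Fa : ((A * p)%N%:R : 'F_p) = 0 by rewrite natrM Fp0 mulr0.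
have E1 : (((A * p + i).+1)%:R : 'F_p) = (i.+1)%:R by rewrite -addnS natrD Fa add0r.
have E2 : (((2 * (2 * (A * p + i) + 1)))%:R : 'F_p) = 2 * (2 * i%:R + 1).
  by rewrite natrM natrD natrM natrD Fa add0r.
rewrite natrM E1 natrM E2.
set j := (p - i.+1)%N.
have ej : (p - i = j.+1)%N by rewrite /j; lia.
rewrite -addnS ej in IH2 *.
have recj := cb_rec j.
have := congr1 (fun n => (n%:R : 'F_p)) recj => /= recjF.
rewrite !natrM natrD natrM in recjF.
have ei : ((i.+1)%:R : 'F_p) = - j%:R.
  have : ((i.+1 + j)%N%:R : 'F_p) = 0 by rewrite /j subnKC ?Fp0 // ltnW.
  by rewrite natrD => /eqP; rewrite addr_eq0 => /eqP.
have ei2 : (2 * (i%:R : 'F_p) + 1) = - (2 * j%:R + 1).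
  have Hi : (i.+1%:R : 'F_p) = i%:R + 1 := mulrSr 1 i.
  have Hi2 : (i%:R : 'F_p) = - j%:R - 1 by rewrite -ei Hi addrK.
  rewrite Hi2; ring.
rewrite addnS -/i ei ei2 => H.
rewrite -IH2 -[RHS]mulrA recjF.
have Hy : (y'%:R : 'F_p) * j%:R = 2 * (2 * j%:R + 1) * y%:R.
  by apply: oppr_inj; rewrite mulrC -mulNr H; ring.
rewrite Hy; ring.
Qed.

Lemma binp p n k j : prime p -> (0 < j < p)%N -> (k < n)%N ->
  (p %| 'C(n * p, k * p + j))%N /\
  ('C(n * p, k * p + j) %/ p)%:R * j%:R = (-1) ^+ j.-1 * (n - k)%:R * ('C(n, k))%:R :> 'F_p.
Proof.
move=> pp hj hk; have p0 := prime_gt0 pp.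
have Fp0 : (p%:R : 'F_p) = 0 by apply: Fp_p.
have md := mul_bin_diag (n * p) (k * p + j.-1).
have ej : (k * p + j.-1).+1 = (k * p + j)%N by lia.
rewrite ej in md.
have hd : (p %| 'C(n * p, k * p + j))%N.
  apply: (@dvd_cancel p (k * p + j)) => //; first by apply: ndvd_small.
  by rewrite -md; apply: dvdn_mulr; apply: dvdn_mull.
split => //.
move: (divnK hd) md; set x := ('C(n * p, k * p + j) %/ p)%N => <-.
have -> : ((k * p + j) * (x * p) = p * ((k * p + j) * x))%N by ring.
have -> : (n * p * 'C((n * p).-1, k * p + j.-1) = p * (n * 'C((n * p).-1, k * p + j.-1)))%N by ring.
move/eqP; rewrite eqn_pmul2l // => /eqP md.
have := congr1 (fun n => (n%:R : 'F_p)) md => /=.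
rewrite natrM natrM natrD natrM Fp0 mulr0 add0r.
have -> : (n * p).-1 = ((n - 1) * p + p.-1)%N by nia.
rewrite lucas //; last lia; last lia.
rewrite Cpm1 //; last lia.
move=> H; rewrite mulrC -H.
have := mul_bin_down n k; rewrite -subn1 => /(congr1 (fun n => (n%:R : 'F_p))).
rewrite !natrM => H2.
by rewrite mulrA H2; ring.
Qed.

Definition Tm n k p j := ('C(n * p, k * p + j) ^ 2 * 'C(2 * k * p + 2 * j, k * p + j)
   * 'C(2 * n * p - 2 * k * p - 2 * j, n * p - k * p - j))%N.

Lemma term_low p h n k j : prime p -> p = (2 * h + 1)%N -> (0 < j <= h)%N -> (k < n)%N ->
  (p ^ 3 %| Tm n k p j)%N /\
  (Tm n k p j %/ p ^ 3)%:R * j%:R ^+ 3 = - 2 * (n - k)%:R ^+ 2 * ('C(n, k))%:R ^+ 2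
     * (cb k)%:R * (2 * (n - k - 1) + 1)%:R * (cb (n - k - 1))%:R :> 'F_p.
Proof.
move=> pp ph hj hk; have p0 := prime_gt0 pp.
have Fp0 : (p%:R : 'F_p) = 0 by apply: Fp_p.
have hj' : (0 < j < p)%N by lia.
have [hd1 H1] := binp pp hj' hk.
set m := (n - k - 1)%N.
have ht : (h + 1 + (h - j) < p)%N by lia.
have [hd3 H3] := cb_carry m pp ph ht.
have ej : (p - (h + 1 + (h - j)) = j)%N by lia.
rewrite ej in H3.
have enp : (n * p = k * p + m * p + p)%N.
  rewrite /m; have {1}-> : n = (k + (n - k - 1).+1)%N by lia. ring.
have e2 : (2 * n * p - 2 * k * p - 2 * j = 2 * (m * p + (h + 1 + (h - j))))%N.
  rewrite -!mulnA enp; move: (k * p)%N (m * p)%N => a b; lia.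
have e3 : (n * p - k * p - j = m * p + (h + 1 + (h - j)))%N.
  rewrite enp; move: (k * p)%N (m * p)%N => a b; lia.
have e4 : (2 * k * p + 2 * j = 2 * (k * p + j))%N by ring.
rewrite /Tm e2 e3 e4 -/(cb (k * p + j)) -/(cb _).
move: (divnK hd1) (divnK hd3) H1 H3.
set x := ('C(n * p, k * p + j) %/ p)%N; set y := (cb (m * p + (h + 1 + (h - j))) %/ p)%N.
move=> <- <- H1 H3.
have -> : ((x * p) ^ 2 * cb (k * p + j) * (y * p) = p ^ 3 * (x ^ 2 * cb (k * p + j) * y))%N by ring.
split; first by apply: dvdn_mulr.
rewrite mulKn ?expn_gt0 ?p0 //.
rewrite /cb.
have -> : (2 * (k * p + j) = (2 * k) * p + 2 * j)%N by ring.
rewrite !natrM lucas //; try lia.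
rewrite /cb in H3.
set s := ((-1) ^+ j.-1 : 'F_p) in H1.
have s2 : s ^+ 2 = 1.
  rewrite /s -exprM mulnC exprM sqrrN !expr1n //.
have -> : (x%:R * x%:R * ('C(2 * k, k)%:R * 'C(2 * j, j)%:R) * y%:R * j%:R ^+ 3 : 'F_p)
   = (x%:R * j%:R) ^+ 2 * 'C(2 * k, k)%:R * (y%:R * j%:R * 'C(2 * j, j)%:R) by ring.
rewrite H1 H3.
have -> : ((s * (n - k)%:R * 'C(n, k)%:R) ^+ 2 : 'F_p) = s ^+ 2 * ((n - k)%:R ^+ 2 * 'C(n, k)%:R ^+ 2) by ring.
rewrite s2; ring.
Qed.


Lemma term_high p h n k j : prime p -> p = (2 * h + 1)%N -> (h < j < p)%N -> (k < n)%N ->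
  (p ^ 3 %| Tm n k p j)%N /\
  (Tm n k p j %/ p ^ 3)%:R * (p - j)%:R ^+ 3 = - 2 * (n - k)%:R ^+ 2 * ('C(n, k))%:R ^+ 2
     * (cb k)%:R * (2 * k + 1)%:R * (cb (n - k - 1))%:R :> 'F_p.
Proof.
move=> pp ph hj hk; have p0 := prime_gt0 pp.
have Fp0 : (p%:R : 'F_p) = 0 by apply: Fp_p.
have hj' : (0 < j < p)%N by lia.
have [hd1 H1] := binp pp hj' hk.
set m := (n - k - 1)%N.
have ht : (h + 1 + (j - h - 1) < p)%N by lia.
have [hd2 H2] := cb_carry k pp ph ht.
have ej : (h + 1 + (j - h - 1) = j)%N by lia.
rewrite ej in hd2 H2.
have enp : (n * p = k * p + m * p + p)%N.
  rewrite /m; have {1}-> : n = (k + (n - k - 1).+1)%N by lia. ring.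
have e2 : (2 * n * p - 2 * k * p - 2 * j = 2 * (m * p + (p - j)))%N.
  rewrite -!mulnA enp; move: (k * p)%N (m * p)%N => a b; lia.
have e3 : (n * p - k * p - j = m * p + (p - j))%N.
  rewrite enp; move: (k * p)%N (m * p)%N => a b; lia.
have e4 : (2 * k * p + 2 * j = 2 * (k * p + j))%N by ring.
rewrite /Tm e2 e3 e4 -/(cb (k * p + j)) -/(cb (_ + (p - j))).
move: (divnK hd1) (divnK hd2) H1 H2.
set x := ('C(n * p, k * p + j) %/ p)%N; set y := (cb (k * p + j) %/ p)%N.
move=> <- <- H1 H2.
have -> : ((x * p) ^ 2 * (y * p) * cb (m * p + (p - j)) = p ^ 3 * (x ^ 2 * y * cb (m * p + (p - j))))%N by ring.
split; first by apply: dvdn_mulr.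
rewrite mulKn ?expn_gt0 ?p0 //.
rewrite /cb.
have -> : (2 * (m * p + (p - j)) = (2 * m) * p + 2 * (p - j))%N by ring.
rewrite !natrM lucas //; try lia.
rewrite /cb in H2.
set s := ((-1) ^+ j.-1 : 'F_p) in H1.
have s2 : s ^+ 2 = 1.
  rewrite /s -exprM mulnC exprM sqrrN !expr1n //.
have ejj : ((p - j)%:R : 'F_p) = - j%:R.
  apply/eqP; rewrite -subr_eq0 opprK -natrD subnK ?Fp0 //; lia.
have -> : (x%:R * x%:R * y%:R * ('C(2 * m, m)%:R * 'C(2 * (p - j), p - j)%:R) * (p - j)%:R ^+ 3 : 'F_p)
   = (x%:R * (p - j)%:R) ^+ 2 * 'C(2 * m, m)%:R * (y%:R * (p - j)%:R * 'C(2 * (p - j), p - j)%:R) by ring.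
rewrite H2 {1}ejj mulrN sqrrN H1.
have -> : ((s * (n - k)%:R * 'C(n, k)%:R) ^+ 2 : 'F_p) = s ^+ 2 * ((n - k)%:R ^+ 2 * 'C(n, k)%:R ^+ 2) by ring.
rewrite s2; ring.
Qed.

Lemma size_bern m : size (bern_seq m) = m.+1.
Proof. by elim: m => //= m IH; rewrite size_rcons IH. Qed.

Lemma bern_nth m i : (i <= m)%N -> (bern_seq m)`_i = bernoulli i.
Proof.
elim: m => [|m IH] hi; first by have -> : i = 0%N by lia.
case: (ltnP i m.+1) => hi'.
  by rewrite /= nth_rcons size_bern hi' IH.
by have -> : i = m.+1 by lia.
Qed.

Lemma bern_rec m : bernoulli m.+1 =
  - (m.+2%:R)^-1 * \sum_(i < m.+1) ('C(m.+2, i))%:R * bernoulli i.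
Proof.
rewrite /bernoulli /= nth_rcons size_bern ltnn eqxx.
congr (_ * _); apply: eq_bigr => i _; congr (_ * _); apply: bern_nth; rewrite -ltnS; exact: ltn_ord.
Qed.

Lemma bern_sum q : (0 < q)%N -> \sum_(i < q.+1) ('C(q.+1, i))%:R * bernoulli i = 0.
Proof.
case: q => // m _.
rewrite big_ord_recr /= bern_rec binSn.
set S := \sum_(i < m.+1) _.
rewrite mulrA mulrN mulfV ?mulN1r ?subrr //.
by rewrite pnatr_eq0.
Qed.

Lemma bern0 : bernoulli 0 = 1. Proof. by []. Qed.

Lemma bin_swap a i l : (i + l <= a)%N -> ('C(a, i) * 'C(a - i, l) = 'C(a, l) * 'C(a - l, i))%N.
Proof.
move=> h.
have f1 := bin_fact (_ : (i <= a)%N); have f2 := bin_fact (_ : (l <= a - i)%N).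
have f3 := bin_fact (_ : (l <= a)%N); have f4 := bin_fact (_ : (i <= a - l)%N).
have e : (a - i - l = a - l - i)%N by lia.
apply/eqP; rewrite -(@eqn_pmul2r (i`! * l`! * (a - i - l)`!)); last by rewrite !muln_gt0 !fact_gt0.
apply/eqP.
transitivity ('C(a, i) * (i`! * ('C(a - i, l) * (l`! * (a - i - l)`!))))%N; first by ring.
rewrite f2; last lia. rewrite f1; last lia.
transitivity ('C(a, l) * (l`! * ('C(a - l, i) * (i`! * (a - l - i)`!))))%N; last by rewrite e; ring.
rewrite f4; last lia. rewrite f3 //; lia.
Qed.

Lemma tri_exchange (F : nat -> nat -> rat) n :
  \sum_(0 <= i < n) \sum_(0 <= l < n - i) F i l = \sum_(0 <= l < n) \sum_(0 <= i < n - l) F i l.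
Proof.
have E1 : forall G : nat -> nat -> rat, \sum_(0 <= i < n) \sum_(0 <= l < n - i) G i l =
   \sum_(0 <= i < n) \sum_(0 <= l < n | (i + l < n)%N) G i l.
  move=> G; apply: eq_big_nat => i hi.
  rewrite (@big_nat_widen _ _ _ 0 (n - i) n); last lia.
  apply: eq_bigl => l; apply/idP/idP => /=; lia.
rewrite E1 E1.
under eq_bigr => i _ do rewrite big_mkcond /=.
rewrite (@exchange_big_nat _ _ _ 0 n 0 n xpredT xpredT).
apply: eq_bigr => l _.
rewrite [RHS]big_mkcond; apply: eq_bigr => i _ /=.
by rewrite addnC.
Qed.

Lemma faulhaber m N : (m.+1)%:R * \sum_(0 <= j < N) (j%:R : rat) ^+ m =
  \sum_(0 <= i < m.+1) ('C(m.+1, i))%:R * bernoulli i * N%:R ^+ (m.+1 - i).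
Proof.
elim: N => [|N IH].
  rewrite big_geq // mulr0 big_mkord; symmetry; apply: big1 => i _.
  have hi := ltn_ord i.
  by rewrite expr0n (_ : (m.+1 - i == 0)%N = false) ?mulr0 //; lia.
rewrite big_nat_recr //= mulrDr IH.
have ex : forall r, (N.+1%:R : rat) ^+ r = N%:R ^+ r + \sum_(0 <= l < r) ('C(r, l))%:R * N%:R ^+ l.
  move=> r; rewrite -addn1 natrD exprD1n big_ord_recr /= binn mulr1n addrC.
  by congr (_ + _); rewrite big_mkord; apply: eq_bigr => l _; rewrite mulr_natl.
under [in RHS]eq_bigr => i _ do rewrite ex mulrDr.
rewrite big_split /=; congr (_ + _).
under eq_bigr => i _ do rewrite big_distrr /=.
transitivity (\sum_(0 <= l < m.+1) ('C(m.+1, l))%:R * N%:R ^+ l *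
    \sum_(0 <= i < m.+1 - l) ('C(m.+1 - l, i))%:R * (bernoulli i : rat)); last first.
  rewrite -tri_exchange; apply: eq_big_nat => i hi; rewrite big_distrr /=.
  apply: eq_big_nat => l hl.
  have hil : (i + l <= m.+1)%N by lia.
  have := bin_swap hil.
  move=> /(congr1 (fun n => (n%:R : rat))); rewrite !natrM => H.
  transitivity (('C(m.+1, i))%:R * ('C(m.+1 - i, l))%:R * (bernoulli l * N%:R ^+ i) : rat); first by ring.
  by rewrite H; ring.
rewrite big_nat_recr //= subSn // subnn.
rewrite big1_seq ?add0r.
  by rewrite big_nat1 binSn bin0 bern0 mulr1 mulr1.
move=> l; rewrite mem_iota => /andP [_ hl].
have -> : (m.+1 - l = (m - l).+1)%N by lia.
by rewrite big_mkord bern_sum ?mulr0 //; lia.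
Qed.

Lemma fact_dvd a b : (a <= b)%N -> (a`! %| b`!)%N.
Proof.
elim: b => [|b IH] h; first by have -> : a = 0%N by lia.
case: (ltnP a b.+1) => h'.
  by rewrite factS dvdn_mull // IH.
by have -> : a = b.+1 by lia.
Qed.

Lemma bern_int i : ((i.+1)`!%:R * bernoulli i : rat) \is a Num.int.
Proof.
elim: i {-2}i (leqnn i) => [|n IH] i hi.
  by have -> : i = 0%N by lia.
case: i hi => [|m] hm; first by [].
rewrite bern_rec factS natrM.
have hm2 : (m.+2%:R : rat) != 0 by rewrite pnatr_eq0.
have -> : (m.+2%:R * (m.+1)`!%:R * (- m.+2%:R^-1 * \sum_(i < m.+1) 'C(m.+2, i)%:R * bernoulli i) : rat)
   = - ((m.+1)`!%:R * \sum_(i < m.+1) 'C(m.+2, i)%:R * bernoulli i).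
  by field; rewrite addrC -[2]/(2%:R) -natrD pnatr_eq0 addn2.
rewrite rpredN; rewrite big_distrr /=; apply: rpred_sum => i _.
have hi := ltn_ord i.
have hfi : ((i : nat).+1 <= m.+1)%N by lia.
have /dvdnP [q hq] := fact_dvd hfi.
rewrite hq natrM.
have -> : (q%:R * (i.+1)`!%:R * ('C(m.+2, i)%:R * bernoulli i) : rat)
   = q%:R * 'C(m.+2, i)%:R * ((i.+1)`!%:R * bernoulli i) by ring.
apply: rpredM; first by apply: rpredM; apply: natr_int.
apply: IH; lia.
Qed.

Lemma Fp_int0 p (z : int) : prime p -> ((z%:~R : 'F_p) == 0) = (p %| z)%Z.
Proof. by move=> pp; rewrite (dvdz_pcharf (pchar_Fp pp)). Qed.

Lemma Z2_int0 p (z : int) : (1 < p)%N -> (z%:~R : 'Z_(p ^ 2)) = 0 -> ((p ^ 2)%N %| z)%Z.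
Proof.
move=> p1 H; have p21 : (1 < p ^ 2)%N by rewrite (ltn_trans p1) // -{1}[p]expn1 ltn_exp2l.
rewrite dvdzE /=.
have key : forall n : nat, (n%:R : 'Z_(p ^ 2)) = 0 -> (p ^ 2 %| n)%N.
  move=> n Hn; have := congr1 (@nat_of_ord _) Hn; rewrite val_Zp_nat //= => Hm.
  by apply/dvdnP; exists (n %/ p ^ 2)%N; rewrite {1}(divn_eq n (p ^ 2)) Hm addn0.
case: z H => n /= H.
  by apply: key.
apply: key; move: H; rewrite NegzE mulrNz pmulrn => /eqP; rewrite oppr_eq0 => /eqP. by [].
Qed.

Lemma Z2_p p : (1 < p)%N -> ((p%:R : 'Z_(p ^ 2)) * p%:R) = 0.
Proof.
move=> p1; have p21 : (1 < p ^ 2)%N by rewrite (ltn_trans p1) // -{1}[p]expn1 ltn_exp2l.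
rewrite -natrM -(Zp_nat_mod p21) (_ : (p * p = p ^ 2)%N) ?modnn //.
Qed.

Lemma approx (R : comPzRingType) (x q : R) n : q * q = 0 ->
  (x + q) ^+ n.+1 = x ^+ n.+1 + n.+1%:R * x ^+ n * q.
Proof.
move=> hq; elim: n => [|n IH]; first by rewrite expr1 expr0 mulr1 mul1r.
rewrite exprS IH.
transitivity (x ^+ n.+2 + (n.+1%:R + 1) * x ^+ n.+1 * q + n.+1%:R * x ^+ n * (q * q)).
  rewrite !exprS; ring.
by rewrite hq mulr0 addr0 natr1.
Qed.

Lemma split_half (V : nmodType) (f : nat -> V) h :
  \sum_(0 <= j < (2 * h + 1)%N) f j =
  f 0%N + \sum_(0 <= j < h) f j.+1 + \sum_(0 <= j < h) f (2 * h + 1 - j.+1)%N.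
Proof.
rewrite (@big_cat_nat _ _ _ h.+1) //=; last lia.
rewrite big_nat_recl // -!addrA; congr (_ + _); congr (_ + _).
rewrite -{1}[h.+1]add0n big_addn.
have -> : (2 * h + 1 - h.+1 = h)%N by lia.
rewrite big_nat_rev /=; apply: eq_big_nat => j hj.
congr f; lia.
Qed.

Lemma split_pair (V : nmodType) (f : nat -> V) h :
  \sum_(0 <= j < (2 * h + 1)%N) f j = f 0%N + \sum_(0 <= j < h) (f (2 * j + 1)%N + f (2 * j.+1)%N).
Proof.
elim: h => [|h IH]; first by rewrite big_nat1 big_geq // addr0.
have -> : (2 * h.+1 + 1 = (2 * h + 1).+2)%N by lia.
rewrite big_nat_recr // big_nat_recr // IH big_nat_recr //= -!addrA.
congr (_ + _); congr (_ + _); congr (_ + _); congr f; lia.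
Qed.

Lemma split_parity (V : nmodType) (f : nat -> V) h :
  \sum_(0 <= j < (2 * h + 1)%N) f j =
  f 0%N + \sum_(0 <= j < h) f (2 * j.+1)%N + \sum_(0 <= j < h) f (2 * h + 1 - 2 * j.+1)%N.
Proof.
rewrite split_pair big_split /= -addrA; congr (_ + _).
rewrite addrC; congr (_ + _).
rewrite big_nat_rev /=; apply: eq_big_nat => j hj; congr f; lia.
Qed.

Lemma even_flip (R : pzRingType) (a b : R) n : ~~ odd n -> (a - b) ^+ n = (b - a) ^+ n.
Proof. by move=> hn; rewrite -opprB exprNn -signr_odd (negPf hn) expr0 mul1r. Qed.

Lemma half_key (R : comPzRingType) h e : odd e ->
  ((2 * h + 1)%N%:R : R) * (2 * h + 1)%N%:R = 0 ->
  (1 - 2 ^+ e.+1) * (\sum_(0 <= j < (2 * h + 1)%N) (j%:R : R) ^+ e.+1)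
  = e.+1%:R * 2 ^+ e * (2 * h + 1)%N%:R * (\sum_(0 <= j < h) (j.+1%:R : R) ^+ e).
Proof.
move=> oe; set q := ((2 * h + 1)%N%:R : R) => hq.
have hq' : (- q) * (- q) = 0 by rewrite mulrNN.
have ev : ~~ odd e.+1 by rewrite /= oe.
set S := \sum_(0 <= j < _) _.
set T := \sum_(0 <= j < h) (j.+1%:R : R) ^+ e.+1.
set U := \sum_(0 <= j < h) (j.+1%:R : R) ^+ e.
have eq1 : S = T + T - e.+1%:R * q * U.
  rewrite /S (split_half (fun j => (j%:R : R) ^+ e.+1)) /= expr0n /= add0r -/T.
  rewrite -addrA; congr (_ + _).
  rewrite /U big_distrr /= -sumrB; apply: eq_big_nat => j hj.
  rewrite natrB; last lia.
  rewrite -/q even_flip // approx // mulrN; ring.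
have eq2 : S = 2 ^+ e.+1 * T + 2 ^+ e.+1 * T - e.+1%:R * 2 ^+ e * q * U.
  rewrite /S (split_parity (fun j => (j%:R : R) ^+ e.+1)) /= expr0n /= add0r.
  rewrite /T /U !big_distrr /= -addrA; congr (_ + _).
    by apply: eq_big_nat => j hj; rewrite natrM exprMn.
  rewrite -sumrB; apply: eq_big_nat => j hj.
  rewrite natrB; last lia.
  rewrite -/q even_flip // natrM approx // !exprMn mulrN; ring.
have -> : (1 - 2 ^+ e.+1) * S = S - 2 ^+ e.+1 * S by ring.
rewrite {1}eq2 eq1 exprS; ring.
Qed.

Lemma faul_int E p beta : ((E.+1)`!%:R * bernoulli E = beta%:~R :> rat) ->
  exists y : int, ((E.+1 * (E.+1)`! * \sum_(0 <= j < p) j ^ E)%N%:Z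
     = (p ^ 2)%N%:Z * y + (E.+1 * p)%N%:Z * beta)%R.
Proof.
move=> hb.
have F := faulhaber E p.
rewrite big_nat_recr //= subSn // subnn binSn expr1 in F.
set Y := \sum_(0 <= i < E) ('C(E.+1, i))%:R * ((E.+1)`!%:R * bernoulli i) * (p%:R : rat) ^+ (E.-1 - i).
have : Y \is a Num.int.
  rewrite /Y big_seq_cond; apply: rpred_sum => i /andP [hi _].
  rewrite mem_iota in hi.
  apply: rpredM; last by apply: rpredX; apply: natr_int.
  apply: rpredM; first by apply: natr_int.
  have hi' : (i.+1 <= E.+1)%N by lia.
  have /dvdnP [q hq] := fact_dvd hi'.
  rewrite hq natrM -mulrA; apply: rpredM; first by apply: natr_int.
  exact: bern_int.
case/intrP => y hy.
exists y; apply: (@intr_inj rat).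
rewrite rmorphD !rmorphM /= -!pmulrn -hy -hb.
rewrite /Y; move: F; move: (E.+1)`! => K F.
rewrite !natrM natr_sum.
under eq_bigr => j _ do rewrite natrX.
have -> : (E.+1%:R * K%:R * \sum_(0 <= i < p) (i%:R : rat) ^+ E)
   = K%:R * (E.+1%:R * \sum_(0 <= i < p) (i%:R : rat) ^+ E) by ring.
rewrite F mulrDr; congr (_ + _); last by ring.
rewrite !big_distrr /=; apply: eq_big_nat => i hi.
have -> : (E.+1 - i = (E.-1 - i) + 2)%N by lia.
rewrite exprD; ring.
Qed.

Lemma Fp_fermat p x : prime p -> ~~ (p %| x)%N -> (x%:R : 'F_p) ^+ p.-1 = 1.
Proof.
move=> pp hx; have p0 := prime_gt0 pp.
have hf := fermat_little x pp.
have hx0 : (x%:R : 'F_p) != 0 by rewrite Fp_eq0.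
by apply: (mulfI hx0); rewrite mulr1 -exprS prednK // -natrX -(Fp_nat_mod pp (x ^ p)%N) hf (Fp_nat_mod pp x).
Qed.

Lemma bern_half p h beta : prime p -> p = (2 * h + 1)%N -> (2 <= h)%N ->
  ((p - 2)`!%:R * bernoulli (p - 3) = beta%:~R :> rat) ->
  ((p - 2)`!%:R * \sum_(0 <= j < h) ((j.+1%:R)^-1) ^+ 3 = - 2 * beta%:~R :> 'F_p).
Proof.
move=> pp ph h2 hb.
have p1 : (1 < p)%N by lia.
set E := (p - 3)%N in hb *.
have pE : (p - 2 = E.+1)%N by rewrite /E; lia.
rewrite pE in hb *.
have [y hy] := faul_int p hb.
set K := (E.+1)`! in hy *.
clearbody K.
set S := (\sum_(0 <= j < p) j ^ E)%N in hy.
have q2 := Z2_p p1.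
have H2 := congr1 (fun z : int => (z%:~R : 'Z_(p ^ 2))) hy; simpl in H2.
rewrite intrD !intrM -!pmulrn natrX expr2 q2 mul0r add0r in H2.
set e := (2 * h - 3)%N.
have oe : odd e.
  by rewrite /e (_ : (2 * h - 3 = (2 * (h - 2)).+1)%N) /= ?odd_double //; lia.
have eE : e.+1 = E by rewrite /e /E; lia.
have hq' : (((2 * h + 1)%N%:R : 'Z_(p ^ 2)) * (2 * h + 1)%N%:R) = 0 by rewrite -ph.
have HK := half_key oe hq'.
rewrite -ph eE in HK.
set Unat := (\sum_(0 <= j < h) j.+1 ^ e)%N.
have HU : (Unat%:R : 'Z_(p ^ 2)) = \sum_(0 <= j < h) (j.+1%:R) ^+ e.
  by rewrite /Unat natr_sum; apply: eq_bigr => j _; rewrite natrX.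
have HS : (S%:R : 'Z_(p ^ 2)) = \sum_(0 <= j < p) (j%:R) ^+ E.
  by rewrite /S natr_sum; apply: eq_bigr => j _; rewrite natrX.
rewrite -HU -HS in HK.
set Zi : int := ((1 - 2 ^+ E) * E.+1%:Z * beta - (E.+1 * K * E * 2 ^ e * Unat)%N%:Z)%R.
have HZ : ((p%:Z * Zi)%:~R : 'Z_(p ^ 2)) = 0.
  rewrite /Zi !rmorphM rmorphB /= !rmorphM /= rmorphB /= rmorphXn /= -!pmulrn !natrM natrX /=.
  move: H2; rewrite !natrM => H2.
  transitivity ((1 - 2 ^+ E) * (E.+1%:R * p%:R * beta%:~R) - E.+1%:R * K%:R * (E%:R * 2 ^+ e * p%:R * Unat%:R) : 'Z_(p ^ 2)); first by ring.
  rewrite -H2 -HK; ring.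
have /Z2_int0 : ((p%:Z * Zi)%:~R : 'Z_(p ^ 2)) = 0 by [].
move=> /(_ p1).
have -> : ((p ^ 2)%N%:Z = p%:Z * p%:Z)%R by rewrite expnS expn1 PoszM.
rewrite dvdz_mul2l; last by rewrite eqz_nat; lia.
rewrite -Fp_int0 // => /eqP HF.
move: HF; rewrite /Zi intrB !intrM /= rmorphB /= rmorphXn /= -!pmulrn !natrM natrX.
have Fp0 : (p%:R : 'F_p) = 0 by apply: Fp_p.
have eE1 : ((E.+1)%:R : 'F_p) = -2.
  apply/eqP; rewrite -subr_eq0 opprK; apply/eqP.
  have : ((E.+1 + 2)%N%:R : 'F_p) = 0 by rewrite (_ : (E.+1 + 2 = p)%N) // /E; lia.
  by rewrite natrD.
have eE0 : ((E)%:R : 'F_p) = -3.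
  apply/eqP; rewrite -subr_eq0 opprK; apply/eqP.
  have : ((E + 3)%N%:R : 'F_p) = 0 by rewrite (_ : (E + 3 = p)%N) // /E; lia.
  by rewrite natrD.
have ndv2 : ~~ (p %| 2)%N by apply/negP => /dvdn_leq; lia.
have b8 : (2%:R : 'F_p) ^+ e * 2%:R ^+ 3 = 1.
  by rewrite -exprD (_ : (e + 3 = p.-1)%N) ?Fp_fermat //; rewrite /e; lia.
have HH : (Unat%:R : 'F_p) = \sum_(0 <= j < h) ((j.+1%:R)^-1) ^+ 3.
  rewrite /Unat natr_sum; apply: eq_big_nat => j hj; rewrite natrX.
  have hx : ~~ (p %| j.+1)%N by apply/negP => /dvdn_leq; lia.
  have hx0 : (j.+1%:R : 'F_p) != 0 by rewrite Fp_eq0.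
  have hf : (j.+1%:R : 'F_p) ^+ e * j.+1%:R ^+ 3 = 1.
    by rewrite -exprD (_ : (e + 3 = p.-1)%N) ?Fp_fermat //; rewrite /e; lia.
  rewrite exprVn; apply: (mulIf (_ : (j.+1%:R : 'F_p) ^+ 3 != 0)); first by rewrite expf_eq0.
  by rewrite hf mulVf // expf_eq0.
rewrite -HH.
have E1 : (2 : 'F_p) ^+ E = 2 * 2%:R ^+ e by rewrite -eE exprS.
have two : ((1 + 1)%N%:R : 'F_p) = 2 by [].
rewrite two E1 eE1 eE0 => HF.
have H6 : (6%:R : 'F_p) != 0.
  rewrite Fp_eq0 // (_ : 6 = 2 * 3)%N // Euclid_dvdM // negb_or ndv2 /=.
  by apply/negP => /dvdn_leq; lia.
apply: (mulfI H6).
set b := (2 : 'F_p) ^+ e in HF b8 *.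
set U := (Unat%:R : 'F_p) in HF *.
transitivity (b * 2 ^+ 3 * (6%:R * (K%:R * U))); first by rewrite b8 mul1r.
transitivity (- 2 ^+ 3 * ((1 - 2 * b) * -2 * beta%:~R - -2 * K%:R * -3 * b * U) + (2 ^+ 3 - 2 * (b * 2 ^+ 3)) * (-2) * beta%:~R); first by ring.
by rewrite HF b8; ring.
Qed.

Lemma sum_from1 (V : zmodType) (f : nat -> V) h :
  \sum_(1 <= j < (2 * h + 1)%N) f j =
  \sum_(0 <= j < h) f j.+1 + \sum_(0 <= j < h) f (2 * h + 1 - j.+1)%N.
Proof.
have := split_half f h; rewrite big_ltn; last lia.
by rewrite -addrA => /addrI.
Qed.

Lemma main_Fp p h n k beta : prime p -> p = (2 * h + 1)%N -> (2 <= h)%N -> (k < n)%N ->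
  ((p - 2)`!%:R * \sum_(0 <= j < h) ((j.+1%:R)^-1) ^+ 3 = - 2 * beta%:~R :> 'F_p) ->
  (p - 2)`!%:R * \sum_(1 <= j < p) (Tm n k p j %/ p ^ 3)%:R =
  8%:R * beta%:~R * n%:R * (n - k)%:R ^+ 2 * ('C(n, k))%:R ^+ 2 * (cb k)%:R * (cb (n - k - 1))%:R :> 'F_p.
Proof.
move=> pp ph h2 hk HB.
have p0 := prime_gt0 pp.
have SS := sum_from1 (fun j => ((Tm n k p j %/ p ^ 3)%:R : 'F_p)) h.
rewrite -ph /= in SS; rewrite SS.
set c1 := (- 2 * (n - k)%:R ^+ 2 * ('C(n, k))%:R ^+ 2
     * (cb k)%:R * (2 * (n - k - 1) + 1)%:R * (cb (n - k - 1))%:R : 'F_p).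
set c2 := (- 2 * (n - k)%:R ^+ 2 * ('C(n, k))%:R ^+ 2
     * (cb k)%:R * (2 * k + 1)%:R * (cb (n - k - 1))%:R : 'F_p).
have L1 : \sum_(0 <= j < h) ((Tm n k p j.+1 %/ p ^ 3)%:R : 'F_p) = c1 * \sum_(0 <= j < h) ((j.+1%:R)^-1) ^+ 3.
  rewrite big_distrr /=; apply: eq_big_nat => j hj.
  have hj' : (0 < j.+1 <= h)%N by lia.
  have [_ H] := term_low pp ph hj' hk.
  have hx0 : (j.+1%:R : 'F_p) != 0 by rewrite Fp_eq0 //; apply/negP => /dvdn_leq; lia.
  rewrite -/c1 in H; rewrite -H exprVn -mulrA mulfV ?mulr1 // expf_eq0 //.
have L2 : \sum_(0 <= j < h) ((Tm n k p (p - j.+1) %/ p ^ 3)%:R : 'F_p) = c2 * \sum_(0 <= j < h) ((j.+1%:R)^-1) ^+ 3.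
  rewrite big_distrr /=; apply: eq_big_nat => j hj.
  have hj' : (h < p - j.+1 < p)%N by lia.
  have [_ H] := term_high pp ph hj' hk.
  have ee : (p - (p - j.+1) = j.+1)%N by lia.
  rewrite ee -/c2 in H.
  have hx0 : (j.+1%:R : 'F_p) != 0 by rewrite Fp_eq0 //; apply/negP => /dvdn_leq; lia.
  rewrite -H exprVn -mulrA mulfV ?mulr1 // expf_eq0 //.
rewrite L1 L2 -mulrDl mulrCA HB /c1 /c2.
have en : ((2 * (n - k - 1) + 1)%N%:R + (2 * k + 1)%N%:R : 'F_p) = 2 * n%:R.
  by rewrite -natrD (_ : (2 * (n - k - 1) + 1 + (2 * k + 1) = 2 * n)%N) ?natrM //; lia.
transitivity (- 2 * (n - k)%:R ^+ 2 * ('C(n, k))%:R ^+ 2 * (cb k)%:R * (cb (n - k - 1))%:R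
   * ((2 * (n - k - 1) + 1)%N%:R + (2 * k + 1)%N%:R) * (-2 * beta%:~R) : 'F_p); first by ring.
rewrite en; ring.
Qed.

Lemma fact_ndvd p m : prime p -> (m < p)%N -> ~~ (p %| m`!)%N.
Proof.
move=> pp; elim: m => [|m IH] hm; first by rewrite fact0 dvdn1; apply/negP => /eqP e; rewrite e in pp.
rewrite factS Euclid_dvdM // negb_or IH ?andbT; last lia.
by apply/negP => /dvdn_leq; lia.
Qed.

Lemma den_dvd (w d : int) : d != 0 -> (denq (w%:~R / d%:~R) %| d)%Z.
Proof.
move=> hd; set x := (w%:~R / d%:~R : rat).
have hd' : (d%:~R : rat) != 0 by rewrite intr_eq0.
have hx : x * d%:~R = w%:~R by rewrite /x mulrVK ?unitfE.
have e : numq x * d = w * denq x.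
  apply: (@intr_inj rat); rewrite !intrM numqE -hx; ring.
have : (denq x %| numq x * d)%Z by rewrite e dvdz_mull.
rewrite Gauss_dvdzr //.
by rewrite /coprimez gcdzC; exact: coprime_num_den.
Qed.

Unset Implicit Arguments.

Theorem mainTheorem6 (p n k : nat) :
  prime p -> (5 <= p)%N -> (k < n)%N ->
  rat_congr p 4
    ((\sum_(1 <= j < p)
        'C(n * p, k * p + j) ^ 2 * 'C(2 * k * p + 2 * j, k * p + j)
        * 'C(2 * n * p - 2 * k * p - 2 * j, n * p - k * p - j))%N%:R)
    (8%:R * (p%:R) ^+ 3 * bernoulli (p - 3) * n%:R * ((n - k)%N%:R) ^+ 2
       * ('C(n, k) ^ 2 * 'C(2 * k, k) * 'C(2 * n - 2 * k - 2, n - k - 1))%N%:R).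
Proof.
move=> pp p5 hk.
have p0 := prime_gt0 pp.
set h := p./2.
have ph : p = (2 * h + 1)%N.
  have [e|o] := even_prime pp; first by rewrite e in p5.
  by have := odd_double_half p; rewrite o /h -muln2; lia.
have h2 : (2 <= h)%N by lia.
have [beta hb] : exists beta : int, (p - 2)`!%:R * bernoulli (p - 3) = beta%:~R :> rat.
  have := bern_int (p - 3); rewrite (_ : (p - 3).+1 = p - 2)%N; last lia.
  by case/intrP => b hb; exists b.
have HB := bern_half pp ph h2 hb.
have HF := main_Fp pp ph h2 hk HB.
have Kn : ~~ (p %| (p - 2)`!)%N by apply: fact_ndvd => //; lia.
set K := (p - 2)`! in hb HF Kn.
have hdiv : forall j, (1 <= j < p)%N -> (p ^ 3 %| Tm n k p j)%N.
  move=> j hj; case: (leqP j h) => hjh.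
    by have [] := term_low pp ph (_ : (0 < j <= h)%N) hk; first by lia.
  by have [] := term_high pp ph (_ : (h < j < p)%N) hk; first by lia.
set T := (\sum_(1 <= j < p) (Tm n k p j %/ p ^ 3))%N.
have E0 : (\sum_(1 <= j < p)
        'C(n * p, k * p + j) ^ 2 * 'C(2 * k * p + 2 * j, k * p + j)
        * 'C(2 * n * p - 2 * k * p - 2 * j, n * p - k * p - j))%N = (p ^ 3 * T)%N.
  rewrite /T big_distrr /=; apply: eq_big_nat => j hj.
  by rewrite [RHS]mulnC divnK //; apply: hdiv.
rewrite E0.
have EM : ('C(n, k) ^ 2 * 'C(2 * k, k) * 'C(2 * n - 2 * k - 2, n - k - 1))%N
   = ('C(n, k) ^ 2 * cb k * cb (n - k - 1))%N.
  by rewrite /cb (_ : (2 * n - 2 * k - 2 = 2 * (n - k - 1))%N) //; lia.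
rewrite EM.
set N := (n * (n - k) ^ 2 * ('C(n, k) ^ 2 * cb k * cb (n - k - 1)))%N.
set Zi : int := (K%:Z * T%:Z - 8 * beta * N%:Z)%R.
have HZ : (Zi%:~R : 'F_p) == 0.
  rewrite /Zi intrB !intrM -!pmulrn /N !natrM /T natr_sum HF; apply/eqP; ring.
rewrite Fp_int0 // in HZ.
case/dvdzP: HZ => w hw.
rewrite /rat_congr.
have hK0 : (K%:R : rat) != 0 by rewrite pnatr_eq0 -lt0n fact_gt0.
have hp0 : (p%:R : rat) != 0 by rewrite pnatr_eq0 -lt0n.
have hB : bernoulli (p - 3) = beta%:~R / K%:R by rewrite -hb mulrAC mulfV ?mul1r.
have hZr : (K%:R * T%:R - 8 * beta%:~R * N%:R : rat) = w%:~R * p%:R.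
  have := congr1 (fun z : int => (z%:~R : rat)) hw; rewrite /Zi /= intrB !intrM -!pmulrn.
  by move=> ->.
have hT : (T%:R : rat) = (w%:~R * p%:R + 8 * beta%:~R * N%:R) / K%:R.
  by rewrite -hZr; field.
have XE : (((p ^ 3 * T)%N%:R : rat) - 8%:R * (p%:R) ^+ 3 * bernoulli (p - 3) * n%:R * ((n - k)%N%:R) ^+ 2
       * ('C(n, k) ^ 2 * cb k * cb (n - k - 1))%N%:R) / (p%:R ^+ 4) = w%:~R / (K%:Z)%:~R.
  have hN : (N%:R : rat) = n%:R * (n - k)%:R ^+ 2 * ('C(n, k) ^ 2 * cb k * cb (n - k - 1))%N%:R.
    by rewrite /N natrM natrM natrX.
  rewrite hN in hT.
  rewrite hB natrM natrX hT.
  move: (('C(n, k) ^ 2 * cb k * cb (n - k - 1))%N%:R : rat) => MM.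
  rewrite -pmulrn.
  field; rewrite ?hK0 ?hp0 //=.
rewrite XE; apply/negP => hd.
have hK0' : (K%:Z != 0)%R by rewrite eqz_nat -lt0n fact_gt0.
have := dvdz_trans hd (den_dvd w hK0').
by rewrite dvdzE /= (negPf Kn).
Qed.
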